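(* Let $A$ and $B$ be rings, $f: A\to B$ an injective ring homomorphism and $J$ a proper ideal of $B$. Suppose that either (i) $f(A)\cap J=\{0\}$, or (ii) $J\subseteq\mathrm{nil}(B)$. Then $A\bowtie^{f}J$ is a nil-Armendariz ring if and only if $f(A)+J$ is a nil-Armendariz ring.
   Context: All rings are associative with identity (not necessarily commutative), ring homomorphisms are unital, and ideals are two-sided. $\mathrm{nil}(R)$ denotes the set of nilpotent elements of a ring $R$, and $\mathrm{nil}(R)[x]$ the set of polynomials all of whose coefficients lie in $\mathrm{nil}(R)$. For a ring homomorphism $f:A\to B$ and an ideal $J$ of $B$, the amalgamation is the subring $A\bowtie^{f}J=\{(a,f(a)+j)\mid a\in A,\ j\in J\}$ of $A\times B$; $f(A)+J=\{f(a)+j: a\in A, j\in J\}$ is a subring of $B$. A ring $R$ is nil-Armendariz if whenever $p(x)=\sum_{i=0}^n a_ix^i$ and $q(x)=\sum_{j=0}^m b_jx^j$ in $R[x]$ satisfy $p(x)q(x)\in\mathrm{nil}(R)[x]$, then $a_ib_j\in\mathrm{nil}(R)$ for all $i,j$. *)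

(* Defs.v *)
From HB Require Import structures.
From mathcomp Require Import all_boot all_order all_algebra.
Set Implicit Arguments. Unset Strict Implicit. Unset Printing Implicit Defensive.
Import GRing.Theory.
Local Open Scope ring_scope.

Definition nilpotent_el {R : nzRingType} (x : R) : Prop := exists n : nat, x ^+ n = 0.

Definition is_twosided_ideal {B : nzRingType} (J : B -> Prop) : Prop :=
  [/\ J 0,
      forall x y, J x -> J y -> J (x + y),
      forall x, J x -> J (- x),
      forall r x, J x -> J (r * x)
    & forall r x, J x -> J (x * r)].

Definition is_proper_ideal {B : nzRingType} (J : B -> Prop) : Prop :=
  is_twosided_ideal J /\ ~ J 1.

Definition is_subring {R : nzRingType} (S : R -> Prop) : Prop :=
  [/\ S 1,
      forall x y, S x -> S y -> S (x - y)
    & forall x y, S x -> S y -> S (x * y)].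

(* Polynomials over S are polynomials over R whose coefficients lie in
   S; multiplication and nilpotency in S are those of R. *)
Definition nil_Armendariz_sub {R : nzRingType} (S : R -> Prop) : Prop :=
  forall p q : {poly R},
    (forall i, S p`_i) -> (forall i, S q`_i) ->
    (forall k, nilpotent_el (p * q)`_k) ->
    forall i j, nilpotent_el (p`_i * q`_j).

Definition nil_Armendariz (R : nzRingType) : Prop :=
  nil_Armendariz_sub (fun _ : R => True).

Definition amalgamation {A B : nzRingType} (f : {rmorphism A -> B})
  (J : B -> Prop) : (A * B)%type -> Prop :=
  fun x => exists (a : A) (j : B), J j /\ x = (a, f a + j).

Definition fA_plus_J {A B : nzRingType} (f : {rmorphism A -> B})
  (J : B -> Prop) : B -> Prop :=
  fun y => exists (a : A) (j : B), J j /\ y = f a + j.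

(* Main.v *)
From Stdlib Require Import ClassicalEpsilon.
Require Import Defs.
From HB Require Import structures.
From mathcomp Require Import all_boot all_order all_algebra.

Local Open Scope ring_scope.
Import GRing.Theory.
Set Implicit Arguments. Unset Strict Implicit.

Section Aux.
Variables (A B : nzRingType) (f : {rmorphism A -> B}) (J : B -> Prop).
Hypothesis hJ : is_twosided_ideal J.

Definition amal (x : (A * B)%type) := J (x.2 - f x.1).

Lemma amalE x : amalgamation f J x <-> amal x.
Proof.
case: hJ => J0 JD JN JL JR.
split.
- by case=> a [j [Jj ->]]; rewrite /amal /= addrC addKr.
- move=> H; exists x.1, (x.2 - f x.1); split => //.
  by case: x H => a b /= _; rewrite addrC subrK.
Qed.

Lemma amal0 : amal 0.
Proof. by case: hJ => J0 *; rewrite /amal /= rmorph0 subr0. Qed.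

Lemma amalD x y : amal x -> amal y -> amal (x + y).
Proof.
case: hJ => J0 JD JN JL JR; rewrite /amal /= => hx hy.
rewrite rmorphD opprD addrACA; exact: JD.
Qed.

Lemma amalM x y : amal x -> amal y -> amal (x * y).
Proof.
case: hJ => J0 JD JN JL JR; rewrite /amal /= => hx hy.
have -> : x.2 * y.2 - f (x.1 * y.1) = (x.2 - f x.1) * y.2 + f x.1 * (y.2 - f y.1).
  by rewrite rmorphM mulrBl mulrBr addrA subrK.
by apply: JD; [apply: JR | apply: JL].
Qed.

Lemma amalX x n : amal x -> amal (x ^+ n).
Proof.
move=> hx; elim: n => [|n IH].
  by rewrite expr0 /amal /= rmorph1 subrr; case: hJ.
by rewrite exprS; apply: amalM.
Qed.

Lemma amal_coefM (P Q : {poly (A * B)%type}) :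
  (forall i, amal P`_i) -> (forall i, amal Q`_i) -> forall k, amal (P * Q)`_k.
Proof.
move=> hP hQ k; rewrite coefM.
apply: (big_ind amal); [exact: amal0 | exact: amalD | move=> i _; exact: amalM].
Qed.

Lemma fst_exp (x : (A * B)%type) n : (x ^+ n).1 = x.1 ^+ n.
Proof. by rewrite -[LHS]/(fst (x ^+ n)) rmorphXn. Qed.
Lemma snd_exp (x : (A * B)%type) n : (x ^+ n).2 = x.2 ^+ n.
Proof. by rewrite -[LHS]/(snd (x ^+ n)) rmorphXn. Qed.

Lemma key x : injective f ->
  ((forall a : A, J (f a) -> f a = 0) \/ (forall b : B, J b -> nilpotent_el b)) ->
  amal x -> nilpotent_el x.2 -> nilpotent_el x.
Proof.
move=> finj hc hx [n hn].
have hxn := amalX n hx; rewrite /amal fst_exp snd_exp hn sub0r in hxn.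
case: hJ => J0 JD JN JL JR.
have Jf : J (f (x.1 ^+ n)) by rewrite -(opprK (f _)); apply: JN.
case: hc => [h0|hnil].
- have := h0 _ Jf; rewrite -(rmorph0 f) => /finj ha.
  exists n; case: x hn ha {hx hxn Jf} => a b /= hn ha.
  apply/eqP; rewrite -[_ == 0]/((_, _) == (0, 0)) xpair_eqE.
  by rewrite fst_exp snd_exp /= ha hn !eqxx.
- have [m hm] := hnil _ Jf.
  exists (n * m.+1)%N.
  case: x hn hm {hx hxn Jf} => a b /= hn hm.
  apply/eqP; rewrite -[_ == 0]/((_, _) == (0, 0)) xpair_eqE.
  rewrite fst_exp snd_exp /= !exprM hn expr0n /= exprS.
  rewrite eqxx andbT; apply/eqP; apply: finj; by rewrite rmorphM rmorph0 [f (_ ^+ m)]rmorphXn hm mulr0.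
Qed.

End Aux.

Theorem theorem3p1 (A B : nzRingType) (f : {rmorphism A -> B}) (J : B -> Prop) :
  injective f ->
  is_proper_ideal J ->
  ((forall a : A, J (f a) -> f a = 0) \/ (forall b : B, J b -> nilpotent_el b)) ->
  (nil_Armendariz_sub (amalgamation f J) <-> nil_Armendariz_sub (fA_plus_J f J)).
Proof.
move=> finj [hJ _] hc.
have nilsnd : forall x : (A * B)%type, nilpotent_el x -> nilpotent_el x.2.
  by move=> x [n hn]; exists n; rewrite -snd_exp hn.
split.
- move=> H p q hp hq hpq i j.
  have ex : forall r : {poly B}, (forall i, fA_plus_J f J r`_i) ->
      exists R : {poly (A * B)%type}, (forall i, amal f J R`_i) /\ map_poly snd R = r.
    move=> r hr.
    have hr' : forall i, exists a, J (r`_i - f a).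
      move=> k; have [a [j0 [Jj ->]]] := hr k; exists a; by rewrite addrC addKr.
    pose g k := proj1_sig (constructive_indefinite_description _ (hr' k)).
    have hg k : J (r`_k - f (g k)) := proj2_sig (constructive_indefinite_description _ (hr' k)).
    exists (\poly_(k < size r) (g k, r`_k)); split.
    + move=> k; rewrite coef_poly; case: ifP => _; first exact: hg.
      exact: amal0.
    + apply/polyP => k; rewrite coef_map coef_poly.
      by case: ifP => // /negbT; rewrite -leqNgt => /(nth_default 0).
  have [P [hP eP]] := ex p hp; have [Q [hQ eQ]] := ex q hq.
  have hPQ k : amal f J (P * Q)`_k by exact: amal_coefM.
  have := H P Q (fun k => proj2 (amalE f hJ _) (hP k)) (fun k => proj2 (amalE f hJ _) (hQ k)).
  move=> /(_ _) H2.
  have : nilpotent_el (P`_i * Q`_j).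
    apply: H2 => k; apply: key; [exact: hJ|exact: finj|exact: hc|exact: hPQ|].
    have -> : ((P * Q)`_k).2 = (p * q)`_k by rewrite -eP -eQ -rmorphM coef_map.
    exact: hpq.
  move/nilsnd.
  have -> : (P`_i * Q`_j).2 = p`_i * q`_j by rewrite -eP -eQ !coef_map.
  done.
- move=> H P Q hP hQ hPQ i j.
  have hP' k : amal f J P`_k by apply/(amalE f hJ).
  have hQ' k : amal f J Q`_k by apply/(amalE f hJ).
  apply: key; [exact: hJ|exact: finj|exact: hc|exact: (amalM hJ (hP' i) (hQ' j))|].
  have hin (R : {poly (A * B)%type}) : (forall k, amal f J R`_k) ->
      forall k, fA_plus_J f J (map_poly snd R)`_k.
    move=> hR k; rewrite coef_map; exists (R`_k).1, ((R`_k).2 - f (R`_k).1); split.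
      exact: hR.
    rewrite [X in _ = X]addrC subrK; reflexivity.
  have H2 := H _ _ (hin _ hP') (hin _ hQ').
  have : nilpotent_el ((map_poly snd P)`_i * (map_poly snd Q)`_j).
    have e k : ((P * Q)`_k).2 = (map_poly snd P * map_poly snd Q)`_k.
      by rewrite -rmorphM coef_map.
    apply: H2 => k; rewrite -e; exact: nilsnd (hPQ k).
  have -> : (P`_i * Q`_j).2 = (map_poly snd P)`_i * (map_poly snd Q)`_j.
    by rewrite !coef_map.
  done.
Qed.
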